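(* Let $\mathbf L\in\mathbb R^3$, $\mathbf L\neq0$, and $T>0$. If a state $(\mathbf r,\mathbf v)\in\Omega$ minimizes $g(\mathbf r)$ over all states $(\mathbf r,\mathbf v)\in\Omega$ satisfying $\mathbf L(\mathbf r,\mathbf v)=\mathbf L$ and $T(\mathbf v)=T$, then all vectors $\mathbf r_i,\mathbf v_i$, $i=1,\dots,N$, lie in the plane through the origin orthogonal to $\mathbf L$; consequently the solution of the equations of motion starting from $(\mathbf r,\mathbf v)$ is a flat (planar) trajectory. That is, the minimum in this problem can be achieved only at states belonging to flat trajectories.
   Context: Fix $N\ge2$, masses $m_i>0$, $\gamma>0$. Three-dimensional configuration space $\mathfrak R_3=\{\mathbf r=(\mathbf r_1,\dots,\mathbf r_N)\in(\mathbb R^3)^N:\ \mathbf r_i\ne\mathbf r_j \text{ for } i\neq j\}$; phase space $\Omega=\mathfrak R_3\times(\mathbb R^3)^N$ with states $(\mathbf r,\mathbf v)$, $\mathbf v=(\mathbf v_1,\dots,\mathbf v_N)$. Angular momentum $\mathbf L(\mathbf r,\mathbf v)=\sum_i m_i\,\mathbf r_i\times\mathbf v_i$; kinetic energy $T(\mathbf v)=\frac12\sum_im_i|\mathbf v_i|^2$; $g(\mathbf r)=\sum_im_i|\mathbf r_i|^2$. Equations of motion: $m_i\ddot{\mathbf r}_i=\sum_{j\ne i}\gamma m_im_j(\mathbf r_j-\mathbf r_i)/|\mathbf r_j-\mathbf r_i|^3$. *)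

(* Defs.v *)
From HB Require Import structures.
From mathcomp Require Import all_boot all_order all_algebra.
From mathcomp Require Import reals.
Set Implicit Arguments. Unset Strict Implicit. Unset Printing Implicit Defensive.
Import Order.TTheory GRing.Theory Num.Theory.
Local Open Scope ring_scope.

Section Defs.
Variable R : realType.

Definition dot3 (u w : 'rV[R]_3) : R := \sum_(k < 3) u 0 k * w 0 k.

Definition cross3 (u w : 'rV[R]_3) : 'rV[R]_3 :=
  \row_(k < 3)
    (if val k == 0%N then u 0 (inord 1) * w 0 (inord 2) - u 0 (inord 2) * w 0 (inord 1)
     else if val k == 1%N then u 0 (inord 2) * w 0 (inord 0) - u 0 (inord 0) * w 0 (inord 2)
     else u 0 (inord 0) * w 0 (inord 1) - u 0 (inord 1) * w 0 (inord 0)).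

Variable N : nat.

Definition in_config (r : 'I_N -> 'rV[R]_3) : Prop :=
  forall i j : 'I_N, i != j -> r i != r j.

Definition ang_mom (m : 'I_N -> R) (r v : 'I_N -> 'rV[R]_3) : 'rV[R]_3 :=
  \sum_(i < N) m i *: cross3 (r i) (v i).

Definition kinetic (m : 'I_N -> R) (v : 'I_N -> 'rV[R]_3) : R :=
  2^-1 * \sum_(i < N) m i * dot3 (v i) (v i).

Definition gmom (m : 'I_N -> R) (r : 'I_N -> 'rV[R]_3) : R :=
  \sum_(i < N) m i * dot3 (r i) (r i).

End Defs.

(* Main.v *)
Require Import Defs.
From HB Require Import structures.
From mathcomp Require Import all_boot all_order all_algebra.
From mathcomp Require Import reals.
From mathcomp Require Import ring lra.
Import Order.TTheory GRing.Theory Num.Theory.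
Local Open Scope ring_scope.

Section Aux.
Variable R : realType.
Implicit Types u w a L r v : 'rV[R]_3.

Lemma ord3 (k : 'I_3) : k = inord 0 \/ k = inord 1 \/ k = inord 2.
Proof.
case: k => [[|[|[|n]]] Hn]; [left|right;left|right;right|done];
  apply: val_inj; rewrite /= inordK //.
Qed.



Lemma row3_eq u w : u 0 (inord 0) = w 0 (inord 0) -> u 0 (inord 1) = w 0 (inord 1) ->
  u 0 (inord 2) = w 0 (inord 2) -> u = w.
Proof.
by move=> h0 h1 h2; apply/rowP => k; case: (ord3 k) => [->|[->|->]].
Qed.

Lemma dot3E u w : dot3 u w = u 0 (inord 0) * w 0 (inord 0) + u 0 (inord 1) * w 0 (inord 1)
  + u 0 (inord 2) * w 0 (inord 2).
Proof.
rewrite /dot3 !big_ord_recr big_ord0 /= add0r.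
have e0 : (widen_ord (leqnSn 2) (widen_ord (leqnSn 1) ord_max)) = inord 0 :> 'I_3
  by apply: val_inj; rewrite /= inordK.
have e1 : (widen_ord (leqnSn 2) ord_max) = inord 1 :> 'I_3 by apply: val_inj; rewrite /= inordK.
have e2 : (ord_max : 'I_3) = inord 2 by apply: val_inj; rewrite /= inordK.
by rewrite e0 e1 e2.
Qed.

Lemma cross3E0 u w : cross3 u w 0 (inord 0) = u 0 (inord 1) * w 0 (inord 2) - u 0 (inord 2) * w 0 (inord 1).
Proof. by rewrite /cross3 mxE /= inordK. Qed.
Lemma cross3E1 u w : cross3 u w 0 (inord 1) = u 0 (inord 2) * w 0 (inord 0) - u 0 (inord 0) * w 0 (inord 2).
Proof. by rewrite /cross3 mxE /= inordK. Qed.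
Lemma cross3E2 u w : cross3 u w 0 (inord 2) = u 0 (inord 0) * w 0 (inord 1) - u 0 (inord 1) * w 0 (inord 0).
Proof. by rewrite /cross3 mxE /= inordK. Qed.

Lemma dot3_ge0 u : 0 <= dot3 u u.
Proof. rewrite dot3E; by rewrite -!expr2 !addr_ge0 ?sqr_ge0. Qed.

Lemma dot3_eq0 u : dot3 u u = 0 -> u = 0.
Proof.
rewrite dot3E -!expr2 => h.
have h0 : u 0 (inord 0) ^+ 2 = 0 by nra.
have h1 : u 0 (inord 1) ^+ 2 = 0 by nra.
have h2 : u 0 (inord 2) ^+ 2 = 0 by nra.
by apply: row3_eq; rewrite mxE; apply/eqP; rewrite -sqrf_eq0; apply/eqP.
Qed.

Lemma dot3_sumr {I : finType} a (F : I -> 'rV[R]_3) :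
  dot3 a (\sum_i F i) = \sum_i dot3 a (F i).
Proof.
rewrite /dot3; under eq_bigr do rewrite summxE big_distrr.
exact: exchange_big.
Qed.

Lemma dot3Zr a c u : dot3 a (c *: u) = c * dot3 a u.
Proof. rewrite !dot3E !mxE; ring. Qed.


Lemma entryB u w k : (u - w) 0 k = u 0 k - w 0 k.
Proof. by rewrite !mxE. Qed.
Lemma entryD u w k : (u + w) 0 k = u 0 k + w 0 k.
Proof. by rewrite !mxE. Qed.
Lemma entryZ c u k : (c *: u) 0 k = c * u 0 k.
Proof. by rewrite !mxE. Qed.

End Aux.
Ltac crd := do 4 rewrite ?dot3E ?entryB ?entryD ?entryZ ?cross3E0 ?cross3E1 ?cross3E2.
Section Aux2.
Variable R : realType.
Implicit Types u w a L r v : 'rV[R]_3.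

Lemma dot3Zl a c u : dot3 (c *: u) a = c * dot3 u a.
Proof. rewrite dot3E. rewrite !entryZ. rewrite dot3E. ring. Qed.

Lemma dot3_cross_orth L u : dot3 (cross3 L u) L = 0.
Proof. crd; ring. Qed.

Lemma key_id L r v l :
  dot3 (v - l *: cross3 L r) (v - l *: cross3 L r) =
  dot3 v v - 2 * l * dot3 L (cross3 r v) + l ^+ 2 * (dot3 L L * dot3 r r - dot3 r L ^+ 2).
Proof. crd; ring. Qed.

Lemma rot_cross L a s K :
  cross3 (s *: a) (K *: cross3 L (s *: a)) =
  (K * s ^+ 2) *: (dot3 a a *: L - dot3 a L *: a).
Proof. apply: row3_eq; crd; ring. Qed.

Lemma rot_dot L a s K :
  dot3 (K *: cross3 L (s *: a)) (K *: cross3 L (s *: a)) =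
  K ^+ 2 * s ^+ 2 * (dot3 L L * dot3 a a - dot3 a L ^+ 2).
Proof. crd; ring. Qed.

Lemma perp_exists L : L != 0 -> exists a, dot3 a L = 0 /\ a != 0.
Proof.
move=> hL.
set x := L 0 (inord 0); set y := L 0 (inord 1).
pose mk3 (p q s : R) : 'rV[R]_3 :=
  \row_(k < 3) (if val k == 0%N then p else if val k == 1%N then q else s).
have E0 p q s : mk3 p q s 0 (inord 0) = p by rewrite mxE /= inordK.
have E1 p q s : mk3 p q s 0 (inord 1) = q by rewrite mxE /= inordK.
have E2 p q s : mk3 p q s 0 (inord 2) = s by rewrite mxE /= inordK.
have [/andP [/eqP hx /eqP hy]|hxy] := boolP ((x == 0) && (y == 0)).
  exists (mk3 1 0 0); split.
    by rewrite dot3E E0 E1 E2 -/x -/y hx; ring.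
  apply/eqP => h; have := E0 1 0 0; rewrite h mxE => /eqP; rewrite eq_sym oner_eq0.
  by [].
exists (mk3 (-y) x 0); split.
  by rewrite dot3E E0 E1 E2 -/x -/y; ring.
apply/eqP => h.
have h0 := E0 (-y) x 0; have h1 := E1 (-y) x 0.
rewrite h mxE in h0; rewrite h mxE in h1.
move: hxy; rewrite -h1 -[y]opprK -h0 oppr0 eqxx.
by [].
Qed.

End Aux2.

Theorem theorem10p1 (R : realType) (N : nat) (hN : (2 <= N)%N)
  (m : 'I_N -> R) (hm : forall i, 0 < m i)
  (Lv : 'rV[R]_3) (hL : Lv != 0) (T : R) (hT : 0 < T)
  (r v : 'I_N -> 'rV[R]_3) :
  in_config r ->
  ang_mom m r v = Lv ->
  kinetic m v = T ->
  (forall r' v' : 'I_N -> 'rV[R]_3,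
      in_config r' -> ang_mom m r' v' = Lv -> kinetic m v' = T ->
      gmom m r <= gmom m r') ->
  forall i : 'I_N, dot3 (r i) Lv = 0 /\ dot3 (v i) Lv = 0.
Proof.
move=> hconf hang hkin hmin.
have hLL : 0 < dot3 Lv Lv.
  rewrite lt_def dot3_ge0 andbT; apply/eqP => h; move/eqP: hL; apply; exact: dot3_eq0.
set LL := dot3 Lv Lv in hLL.
have [a [haL ha0]] := @perp_exists R Lv hL.
have hA : 0 < dot3 a a.
  rewrite lt_def dot3_ge0 andbT; apply/eqP => h; move/eqP: ha0; apply; exact: dot3_eq0.
set A := dot3 a a in hA.
have N0 : (0 < N)%N by apply: leq_trans hN.
pose i0 : 'I_N := Ordinal N0.
set C := \sum_(i < N) m i * (i.+1)%:R ^+ 2.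
have hC : 0 < C.
  rewrite /C (bigD1 i0) //.
  apply: ltr_pwDl.
    by rewrite mulr_gt0 // exprn_gt0 // ltr0Sn.
  by apply: sumr_ge0 => i _; apply: mulr_ge0; [exact: ltW | exact: sqr_ge0].
pose K := 2 * T / LL.
pose t2 := LL / (2 * T * A * C).
have ht2 : 0 < t2 by rewrite /t2 divr_gt0 // !mulr_gt0.
pose t := Num.sqrt t2.
have ht : 0 < t by rewrite sqrtr_gt0.
have htt : t ^+ 2 = t2 by rewrite sqr_sqrtr // ltW.
pose r' := fun i : 'I_N => (t * (i.+1)%:R) *: a.
pose v' := fun i : 'I_N => K *: cross3 Lv (r' i).
have hsum : forall c : R, \sum_(i < N) m i * (c * (t * (i.+1)%:R) ^+ 2) = c * t2 * C.
  move=> c; rewrite /C mulr_sumr; apply: eq_bigr => i _.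
  by rewrite exprMn htt; ring.
have hg' : gmom m r <= LL / (2 * T).
  have -> : LL / (2 * T) = gmom m r'.
    rewrite /gmom (eq_bigr (fun i => m i * (A * (t * (i.+1)%:R) ^+ 2))); last first.
      by move=> i _; rewrite /r' dot3Zl dot3Zr -/A; ring.
    rewrite hsum /t2; field.
    by rewrite (gt_eqF hC) (gt_eqF hA) (gt_eqF hT).
  apply: (hmin r' v').
  - move=> i j hij; apply/negP => /eqP h; rewrite /r' in h.
    have : (t * (i.+1)%:R - t * (j.+1)%:R) *: a = 0 by rewrite scalerBl h subrr.
    move/eqP; rewrite scaler_eq0 (negbTE ha0) orbF subr_eq0 => /eqP /(mulfI (negbT (gt_eqF ht))) /eqP.
    rewrite eqr_nat eqSS => /eqP hv.
    by move/eqP: hij; apply; apply: val_inj.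
  - rewrite /ang_mom (eq_bigr (fun i => (m i * ((K * A) * (t * (i.+1)%:R) ^+ 2)) *: Lv)); last first.
      move=> i _; rewrite /v' /r' /= rot_cross haL scale0r subr0 !scalerA -/A; congr (_ *: _); ring.
    rewrite -scaler_suml hsum.
    have -> : K * A * t2 * C = 1.
      rewrite /K /t2; field.
      by rewrite (gt_eqF hC) (gt_eqF hA) (gt_eqF hT) (gt_eqF hLL).
    by rewrite scale1r.
  - rewrite /kinetic (eq_bigr (fun i => m i * ((K ^+ 2 * LL * A) * (t * (i.+1)%:R) ^+ 2))); last first.
      by move=> i _; rewrite /v' /r' /= rot_dot haL -/A -/LL; ring.
    rewrite hsum /K /t2; field.
    by rewrite (gt_eqF hC) (gt_eqF hA) (gt_eqF hT) (gt_eqF hLL).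
have hg0 : 0 < gmom m r.
  rewrite lt_def; apply/andP; split; last first.
    by apply: sumr_ge0 => i _; apply: mulr_ge0; [exact: ltW| exact: dot3_ge0].
  apply/eqP => h0.
  have hz : forall i, r i = 0.
    move=> i; apply: dot3_eq0.
    have := psumr_eq0P (fun j _ => mulr_ge0 (ltW (hm j)) (dot3_ge0 _ (r j))) h0 (i:=i) isT.
    by move/eqP; rewrite mulf_eq0 (gt_eqF (hm i)) /= => /eqP.
  pose i1 : 'I_N := Ordinal hN.
  have := hconf i0 i1; rewrite (hz i0) (hz i1) eqxx.
  by move=> /(_ isT).
set g := gmom m r in hg' hg0.
pose l := g^-1.
have hl : 0 < l by rewrite invr_gt0.
have hlg : l * g = 1 by rewrite mulVf // (gt_eqF hg0).
set S := \sum_(i < N) m i * dot3 (v i - l *: cross3 Lv (r i)) (v i - l *: cross3 Lv (r i)).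
set Q := \sum_(i < N) m i * dot3 (r i) Lv ^+ 2.
have hv : \sum_(i < N) m i * dot3 (v i) (v i) = 2 * T.
  by rewrite -hkin /kinetic mulrA divff ?mul1r // pnatr_eq0.
have hB : \sum_(i < N) m i * dot3 Lv (cross3 (r i) (v i)) = LL.
  transitivity (dot3 Lv (ang_mom m r v)); last by rewrite hang.
  by rewrite /ang_mom dot3_sumr; apply: eq_bigr => i _; rewrite dot3Zr.
have hS : S = 2 * T - 2 * l * LL + l ^+ 2 * (LL * g - Q).
  rewrite /S (eq_bigr (fun i => m i * dot3 (v i) (v i) - (2 * l) * (m i * dot3 Lv (cross3 (r i) (v i)))
     + (l ^+ 2 * LL) * (m i * dot3 (r i) (r i)) - l ^+ 2 * (m i * dot3 (r i) Lv ^+ 2))); last first.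
    by move=> i _; rewrite key_id -/LL; ring.
  rewrite sumrB big_split /= sumrB -!mulr_sumr hv hB.
  rewrite /g /gmom /Q; ring.
have hS0 : 0 <= S.
  by apply: sumr_ge0 => i _; apply: mulr_ge0; [exact: ltW| exact: dot3_ge0].
have hQ0 : 0 <= Q.
  by apply: sumr_ge0 => i _; apply: mulr_ge0; [exact: ltW| exact: sqr_ge0].
have e1 : LL / (2 * T) * (2 * T) = LL by field; rewrite (gt_eqF hT).
have h1 : 2 * T * g <= LL.
  rewrite -[X in _ <= X]e1 [_ * g]mulrC; apply: ler_wpM2r; [lra | exact: hg'].
have h2 : 2 * T <= l * LL.
  have := ler_wpM2l (ltW hl) h1; rewrite [2 * T * g]mulrC mulrA hlg mul1r.
  by [].
have e2 : l ^+ 2 * (LL * g - Q) = l * LL - l ^+ 2 * Q.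
  have -> : l ^+ 2 * (LL * g - Q) = l * LL * (l * g) - l ^+ 2 * Q by ring.
  by rewrite hlg mulr1.
rewrite e2 in hS.
have hq0 : 0 <= l ^+ 2 * Q by rewrite mulr_ge0 // sqr_ge0.
have hSz : S = 0 by lra.
have hqz : l ^+ 2 * Q = 0 by lra.
have hQz : Q = 0.
  by move/eqP: hqz; rewrite mulf_eq0 expf_eq0 (gt_eqF hl) andbF /= => /eqP.
move=> i.
have hw := psumr_eq0P (fun j _ => mulr_ge0 (ltW (hm j)) (dot3_ge0 _ _)) hSz (i:=i) isT.
have hr := psumr_eq0P (fun j _ => mulr_ge0 (ltW (hm j)) (sqr_ge0 _)) hQz (i:=i) isT.
move/eqP: hw; rewrite mulf_eq0 (gt_eqF (hm i)) /= => /eqP /dot3_eq0 /eqP.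
rewrite subr_eq0 => /eqP hvi.
move/eqP: hr; rewrite mulf_eq0 (gt_eqF (hm i)) /= sqrf_eq0 => /eqP hri.
split => //.
by rewrite hvi dot3Zl dot3_cross_orth mulr0.
Qed.
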